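(* Let $R$ be an NJ-symmetric ring and let $M$ be a maximal left ideal of $R$ which is not essential (as a left ideal). Then $M$ is a two-sided ideal of $R$. Likewise, if $M$ is a maximal right ideal of $R$ which is not essential (as a right ideal), then $M$ is a two-sided ideal of $R$.
   Context: Rings are associative with identity. $N(R)$ is the set of nilpotent elements, $J(R)$ the Jacobson radical. $R$ is NJ-symmetric if for all $a,b,c\in R$, $abc\in N(R)$ implies $bac\in J(R)$. *)

(* Defs.v *)
From mathcomp Require Import all_boot all_algebra.
Set Implicit Arguments. Unset Strict Implicit. Unset Printing Implicit Defensive.
Import GRing.Theory.
Local Open Scope ring_scope.

Section RingNotions.
Variable R : nzRingType.

Definition left_ideal (I : R -> Prop) : Prop :=
  [/\ I 0, (forall x y, I x -> I y -> I (x + y)) & (forall r x, I x -> I (r * x))].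

Definition right_ideal (I : R -> Prop) : Prop :=
  [/\ I 0, (forall x y, I x -> I y -> I (x + y)) & (forall r x, I x -> I (x * r))].

Definition two_sided_ideal (I : R -> Prop) : Prop := left_ideal I /\ right_ideal I.

Definition maximal_left_ideal (M : R -> Prop) : Prop :=
  [/\ left_ideal M, ~ M 1 &
      forall J, left_ideal J -> (forall x, M x -> J x) ->
        (forall x, J x -> M x) \/ (forall x, J x)].

Definition maximal_right_ideal (M : R -> Prop) : Prop :=
  [/\ right_ideal M, ~ M 1 &
      forall J, right_ideal J -> (forall x, M x -> J x) ->
        (forall x, J x -> M x) \/ (forall x, J x)].

Definition essential_left_ideal (M : R -> Prop) : Prop :=
  left_ideal M /\
  forall K, left_ideal K -> (exists x, K x /\ x <> 0) ->
    exists x, K x /\ M x /\ x <> 0.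

Definition essential_right_ideal (M : R -> Prop) : Prop :=
  right_ideal M /\
  forall K, right_ideal K -> (exists x, K x /\ x <> 0) ->
    exists x, K x /\ M x /\ x <> 0.

Definition nilpotent_elt (x : R) : Prop := exists n : nat, x ^+ n = 0.

Definition jacobson (x : R) : Prop :=
  forall M, maximal_left_ideal M -> M x.

Definition NJ_symmetric : Prop :=
  forall a b c : R, nilpotent_elt (a * b * c) -> jacobson (b * a * c).

End RingNotions.

(* Main.v *)
Require Import Defs.
From mathcomp Require Import all_boot all_algebra.
From Stdlib Require Import Classical.
Import GRing.Theory.
Local Open Scope ring_scope.

Section Helpers.
Context {R : nzRingType}.

Lemma sep_left (M : R -> Prop) : left_ideal M -> ~ essential_left_ideal M ->
  exists K, left_ideal K /\ (exists x, K x /\ x <> 0) /\ (forall x, K x -> M x -> x = 0).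
Proof.
move=> HM HE; apply: NNPP => H; apply: HE; split=> // K HK Hx.
apply: NNPP => H2; apply: H; exists K; split=> //; split=> // x Kx Mx.
by apply: NNPP => nx; apply: H2; exists x.
Qed.

Lemma sep_right (M : R -> Prop) : right_ideal M -> ~ essential_right_ideal M ->
  exists K, right_ideal K /\ (exists x, K x /\ x <> 0) /\ (forall x, K x -> M x -> x = 0).
Proof.
move=> HM HE; apply: NNPP => H; apply: HE; split=> // K HK Hx.
apply: NNPP => H2; apply: H; exists K; split=> //; split=> // x Kx Mx.
by apply: NNPP => nx; apply: H2; exists x.
Qed.

Lemma decomp_left (M K : R -> Prop) : maximal_left_ideal M -> left_ideal K ->
  (exists x, K x /\ x <> 0) -> (forall x, K x -> M x -> x = 0) ->
  exists e f, M e /\ K f /\ e + f = 1.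
Proof.
case=> [[HM0 HMa HMm] nM1 Hmax] [HK0 HKa HKm] [k [Kk nk]] HKM.
pose J := fun x => exists m g, M m /\ K g /\ x = m + g.
have HJ : left_ideal J.
  split.
  - by exists 0, 0; rewrite addr0.
  - move=> x y [m1 [g1 [M1 [K1 ->]]]] [m2 [g2 [M2 [K2 ->]]]].
    by exists (m1 + m2), (g1 + g2); rewrite addrACA; split; [apply: HMa|split=>//; apply: HKa].
  - move=> r x [m1 [g1 [M1 [K1 ->]]]].
    by exists (r * m1), (r * g1); rewrite mulrDr; split; [apply: HMm|split=>//; apply: HKm].
case: (Hmax J HJ).
- by move=> x Mx; exists x, 0; rewrite addr0.
- move=> H; exfalso; apply: nk; apply: HKM => //; apply: H.
  by exists 0, k; rewrite add0r.
- move=> H; case: (H 1) => e [f [Me [Kf E]]]; by exists e, f.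
Qed.

Lemma decomp_right (M K : R -> Prop) : maximal_right_ideal M -> right_ideal K ->
  (exists x, K x /\ x <> 0) -> (forall x, K x -> M x -> x = 0) ->
  exists e f, M e /\ K f /\ e + f = 1.
Proof.
case=> [[HM0 HMa HMm] nM1 Hmax] [HK0 HKa HKm] [k [Kk nk]] HKM.
pose J := fun x => exists m g, M m /\ K g /\ x = m + g.
have HJ : right_ideal J.
  split.
  - by exists 0, 0; rewrite addr0.
  - move=> x y [m1 [g1 [M1 [K1 ->]]]] [m2 [g2 [M2 [K2 ->]]]].
    by exists (m1 + m2), (g1 + g2); rewrite addrACA; split; [apply: HMa|split=>//; apply: HKa].
  - move=> r x [m1 [g1 [M1 [K1 ->]]]].
    by exists (m1 * r), (g1 * r); rewrite mulrDl; split; [apply: HMm|split=>//; apply: HKm].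
case: (Hmax J HJ).
- by move=> x Mx; exists x, 0; rewrite addr0.
- move=> H; exfalso; apply: nk; apply: HKM => //; apply: H.
  by exists 0, k; rewrite add0r.
- move=> H; case: (H 1) => e [f [Me [Kf E]]]; by exists e, f.
Qed.

End Helpers.

Theorem lemma2p7 (R : nzRingType) (hNJ : NJ_symmetric R) :
  (forall M : R -> Prop, maximal_left_ideal M -> ~ essential_left_ideal M ->
     two_sided_ideal M) /\
  (forall M : R -> Prop, maximal_right_ideal M -> ~ essential_right_ideal M ->
     two_sided_ideal M).
Proof.
split.
- move=> M HMx HE.
  have HMl := HMx; case: HMl => [HMl nM1 Hmax].
  have [K [HK [Hk HKM]]] := sep_left M HMl HE.
  have [e [f [Me [Kf Ef]]]] := decomp_left M K HMx HK Hk HKM.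
  case: HMl => [HM0 HMa HMm]; case: HK => [HK0 HKa HKm].
  have Ee : e = 1 - f by rewrite -Ef addrK.
  have Ef' : f = 1 - e by rewrite -Ef addrAC subrr add0r.
  have fe0 : f * e = 0.
    apply: HKM; last by apply: HMm.
    rewrite Ee mulrBr mulr1; apply: HKa => //; rewrite -mulNr; exact: HKm.
  have mf0 : forall m, M m -> m * f = 0.
    move=> m Mm; apply: HKM; first exact: HKm.
    rewrite Ef' mulrBr mulr1; apply: HMa => //; rewrite -mulNr; exact: HMm.
  have ff : f * f = f by rewrite {2}Ef' mulrBr mulr1 fe0 subr0.
  have erf : forall r, e * r * f = 0.
    move=> r; set y := e * r * f.
    have Ny : nilpotent_elt (1 * 1 * y).
      exists 2%N; rewrite !mul1r expr2 /y.
      have -> : e * r * f * (e * r * f) = e * r * (f * e) * r * f by rewrite !mulrA.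
      by rewrite fe0 mulr0 !mul0r.
    have My : M y by have := hNJ _ _ _ Ny M HMx; rewrite !mul1r.
    by rewrite -{1}(mf0 _ My) /y -[RHS]mulrA ff.
  split; first by split.
  split=> // r m Mm.
  have me : m = m * e by rewrite -{1}(mulr1 m) -Ef mulrDr mf0 // addr0.
  have -> : m * r = m * r * e + m * r * f by rewrite -mulrDr Ef mulr1.
  have -> : m * r * f = 0 by rewrite me -!mulrA (mulrA e) erf mulr0.
  by rewrite addr0; apply: HMm.
- move=> M HMx HE.
  have HMl := HMx; case: HMl => [HMl nM1 Hmax].
  have [K [HK [Hk HKM]]] := sep_right M HMl HE.
  have [e [f [Me [Kf Ef]]]] := decomp_right M K HMx HK Hk HKM.
  case: HMl => [HM0 HMa HMm]; case: HK => [HK0 HKa HKm].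
  have Ee : e = 1 - f by rewrite -Ef addrK.
  have Ef' : f = 1 - e by rewrite -Ef addrAC subrr add0r.
  have ef0 : e * f = 0.
    apply: HKM; last by apply: HMm.
    rewrite Ee mulrBl mul1r; apply: HKa => //; rewrite -mulrN; exact: HKm.
  have fm0 : forall m, M m -> f * m = 0.
    move=> m Mm; apply: HKM; first exact: HKm.
    rewrite Ef' mulrBl mul1r; apply: HMa => //; rewrite -mulrN; exact: HMm.
  have ff : f * f = f by rewrite {1}Ef' mulrBl mul1r ef0 subr0.
  have fe0 : f * e = 0 by rewrite Ee mulrBr mulr1 ff subrr.
  have fn0 : f <> 0 by move=> f0; apply: nM1; rewrite -Ef f0 addr0.
  (* minimality of fR *)
  have minf : forall t, t = f * t -> t <> 0 -> exists s, t * s = f.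
    move=> t tE tn0.
    pose J := fun x => exists m s, M m /\ x = m + t * s.
    have HJ : right_ideal J.
      split.
      - by exists 0, 0; rewrite mulr0 addr0.
      - move=> x y [m1 [s1 [M1 ->]]] [m2 [s2 [M2 ->]]].
        exists (m1 + m2), (s1 + s2); rewrite mulrDr addrACA; split=> //; exact: HMa.
      - move=> r x [m1 [s1 [M1 ->]]].
        exists (m1 * r), (s1 * r); rewrite mulrDl mulrA; split=> //; exact: HMm.
    case: (Hmax J HJ).
    - by move=> x Mx; exists x, 0; rewrite mulr0 addr0.
    - move=> H; exfalso; apply: tn0.
      have Mt : M t by apply: H; exists 0, 1; rewrite mulr1 add0r.
      by rewrite tE fm0.
    - move=> H; case: (H 1) => m [s [Mm E1]]; exists s.
      by rewrite -(mulr1 f) E1 mulrDr fm0 // add0r mulrA -tE.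
  pose L := fun x => forall r, f * r * x * f = 0.
  have HL : maximal_left_ideal L.
    split.
    - split.
      + by move=> r; rewrite mulr0 mul0r.
      + by move=> x y Lx Ly r; rewrite mulrDr mulrDl Lx Ly addr0.
      + by move=> s x Lx r; rewrite !mulrA -(mulrA f) Lx.
    - by move=> H; apply: fn0; have := H 1; rewrite mulr1 !mulr1 ff.
    - move=> J' [HJ0 HJa HJm] LJ.
      case: (classic (forall x, J' x -> L x)) => [H|H]; [by left|right].
      have [x [Jx nLx]] : exists x, J' x /\ ~ L x.
        by apply: NNPP => H2; apply: H => x Jx; apply: NNPP => nL; apply: H2; exists x.
      have [r nr] : exists r, f * r * x * f <> 0.
        by apply: NNPP => H2; apply: nLx => r; apply: NNPP => H3; apply: H2; exists r.
      have Le : L e by move=> s; rewrite -mulrA ef0 mulr0.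
      have Lxe : L (x * e) by move=> s; rewrite -!mulrA ef0 !mulr0.
      have Jxf : J' (x * f).
        have -> : x * f = x + - (x * e) by rewrite Ef' mulrBr mulr1.
        apply: HJa => //; rewrite -mulN1r; apply: HJm; exact: LJ.
      set t := f * r * x * f.
      have Jt : J' t by rewrite /t -mulrA; apply: HJm.
      have tE : t = f * t by rewrite /t !mulrA ff.
      have tf : t * f = t by rewrite /t -mulrA ff.
      have [s ts] := minf t tE nr.
      set w := f * s * f.
      have tw : t * w = f by rewrite /w !mulrA tf ts ff.
      have wE : w = f * w by rewrite /w !mulrA ff.
      have wn0 : w <> 0 by move=> w0; apply: fn0; rewrite -tw w0 mulr0.
      have [s' ws'] := minf w wE wn0.
      have wf : w * f = w by rewrite /w -mulrA ff.
      have tfs : t = f * s' by rewrite -{1}tf -{1}ws' mulrA tw.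
      have wt : w * t = f by rewrite tfs mulrA wf ws'.
      have Jf : J' f by rewrite -wt; apply: HJm.
      have J1 : J' 1 by rewrite -Ef; apply: HJa => //; exact: LJ.
      by move=> z; rewrite -(mulr1 z); apply: HJm.
  have fre : forall r, f * r * e = 0.
    move=> r; apply: NNPP => tn0.
    have tE : f * r * e = f * (f * r * e) by rewrite !mulrA ff.
    have [s ts] := minf _ tE tn0.
    set u := e * s * f.
    have Nu : nilpotent_elt (1 * 1 * u).
      exists 2%N; rewrite !mul1r expr2 /u.
      have -> : e * s * f * (e * s * f) = e * s * (f * e) * s * f by rewrite !mulrA.
      by rewrite fe0 mulr0 !mul0r.
    have Lu : L u by have := hNJ _ _ _ Nu L HL; rewrite !mul1r.
    apply: fn0; have := Lu r; rewrite /u.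
    have -> : f * r * (e * s * f) * f = f * r * e * s * f by rewrite -!mulrA ff.
    by rewrite ts ff.
  split; last by split.
  split=> // r m Mm.
  have me : m = e * m by rewrite -{1}(mul1r m) -Ef mulrDl fm0 // addr0.
  have -> : r * m = e * (r * m) + f * (r * m) by rewrite -mulrDl Ef mul1r.
  have -> : f * (r * m) = 0 by rewrite me !mulrA fre mul0r.
  by rewrite addr0; apply: HMm.
Qed.
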